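(* Let $(\mathbf{i},\mathbf{a})\in I^m\times\mathbb{Z}^m$ be an integral pair and let $\pi_{\mathbf{a}}\in S_m$ be the shortest permutation such that $\pi_{\mathbf{a}}(\mathbf{a})$ is weakly increasing with respect to the preorder $\preceq$. Then $\pi_{\mathbf{a}}$ is $(\mathbf{i},\mathbf{a})$-admissible.
   Context: $I$ is the vertex set of a finite simple bipartite graph $I=I_{\bar0}\sqcup I_{\bar1}$ (parities $0,1$); every edge is oriented from its even endpoint to its odd endpoint, and $i\leftarrow j$ means there is an oriented edge from $j$ to $i$. $(\mathbf{i},\mathbf{a})$ is integral if each $a_k$ is an integer whose residue mod 2 equals the parity of $i_k$. The preorder $\preceq$ on $\mathbb{Z}$ is $a\preceq b$ iff $\lfloor a/2\rfloor\le\lfloor b/2\rfloor$. $S_m$ acts on tuples by $\pi(\mathbf{a})=(a_{\pi^{-1}(1)},\dots,a_{\pi^{-1}(m)})$. Distinct indices $k,l$ are not $(\mathbf{i},\mathbf{a})$-switchable if $i_k\leftarrow i_l$ and $a_k=a_l+1$ (checked for the pair in either order); $\pi$ is $(\mathbf{i},\mathbf{a})$-admissible if for every non-switchable pair $k,l$, $\pi(k),\pi(l)$ are in the same relative order as $k,l$. *)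

(* Defs.v *)
From mathcomp Require Import all_boot all_order all_algebra all_fingroup.
Set Implicit Arguments. Unset Strict Implicit. Unset Printing Implicit Defensive.
From mathcomp Require Import intdiv.
Import Order.TTheory GRing.Theory Num.Theory.

(* Vertex set: a finType T with parity par : T -> bool (false = parity 0 = even,
   true = parity 1 = odd) and adjacency e : rel T.  *)

Definition simple_bipartite (T : finType) (par : T -> bool) (e : rel T) : Prop :=
  (forall x y, e x y = e y x) /\ (forall x, ~~ e x x) /\
  (forall x y, e x y -> par x != par y).

(* i <- j : oriented edge from j to i, edges oriented from even to odd endpoint *)
Definition arrow (T : finType) (par : T -> bool) (e : rel T) (i j : T) : bool :=
  [&& e j i, ~~ par j & par i].

Definition integral (T : finType) (par : T -> bool) m (i : 'I_m -> T) (a : 'I_m -> int) : Prop :=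
  forall k, (a k %% 2)%Z = (Posz (par (i k) : nat)).

Definition preceq (a b : int) : bool := ((a %/ 2)%Z <= (b %/ 2)%Z)%R.

Definition permact m (pi : 'S_m) (A : Type) (a : 'I_m -> A) : 'I_m -> A :=
  fun k => a ((pi^-1)%g k).

Definition weakly_increasing m (b : 'I_m -> int) : Prop :=
  forall k l : 'I_m, k <= l -> preceq (b k) (b l).

Definition perm_length m (pi : 'S_m) : nat :=
  #|[set p : 'I_m * 'I_m | (p.1 < p.2) && (pi p.2 < pi p.1)]|.

Definition not_switchable (T : finType) (par : T -> bool) (e : rel T) m
  (i : 'I_m -> T) (a : 'I_m -> int) (k l : 'I_m) : bool :=
  (k != l) &&
  ((arrow par e (i k) (i l) && (a k == a l + 1)%R) ||
   (arrow par e (i l) (i k) && (a l == a k + 1)%R)).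

Definition admissible (T : finType) (par : T -> bool) (e : rel T) m
  (i : 'I_m -> T) (a : 'I_m -> int) (pi : 'S_m) : Prop :=
  forall k l : 'I_m, not_switchable par e i a k l ->
    (k < l) = (pi k < pi l).

(* Main.v *)
Require Import Defs.
From mathcomp Require Import all_boot all_order all_algebra all_fingroup.
From mathcomp Require Import intdiv zify.
Import Order.TTheory GRing.Theory Num.Theory.

Lemma core m (a : 'I_m -> int) (pi : 'S_m) :
  weakly_increasing (permact pi a) ->
  (forall sigma : 'S_m, weakly_increasing (permact sigma a) ->
     perm_length pi <= perm_length sigma) ->
  forall u v : 'I_m, u < v -> (a u %/ 2)%Z = (a v %/ 2)%Z -> pi v < pi u -> False.
Proof.
move=> Hw Hmin.
suff H : forall n (u v : 'I_m), u < v -> (a u %/ 2)%Z = (a v %/ 2)%Z ->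
   pi v < pi u -> pi u - pi v < n -> False.
  by move=> u v uv euv puv; apply: (H (pi u - pi v).+1 u v).
elim=> [//|n IH] u v uv euv puv gap.
have cls : forall z, pi v <= pi z <= pi u -> (a z %/ 2)%Z = (a v %/ 2)%Z.
  move=> z /andP[h1 h2].
  have := Hw _ _ h1; have := Hw _ _ h2; rewrite /permact /preceq !permK.
  by rewrite euv => A B; apply/eqP; rewrite eq_le A B.
have mid : forall z, pi v < pi z < pi u -> u < z < v.
  move=> z /andP[h1 h2].
  have cz : (a z %/ 2)%Z = (a v %/ 2)%Z by apply: cls; rewrite (ltnW h1) (ltnW h2).
  case: (ltngtP z u) => [zu|uz|/val_inj zu]; last by move: h2; rewrite zu ltnn.
  - exfalso; apply: (IH z v) => //; [exact: ltn_trans zu uv|clear -gap h1 h2; lia].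
  case: (ltngtP z v) => [zv|vz|/val_inj zv]; first by apply/andP; split.
  - exfalso; apply: (IH u z) => //; [by rewrite cz|clear -gap h1 h2; lia].
  - by move: h1; rewrite zv ltnn.
set sigma := (pi * tperm (pi u) (pi v))%g.
have sE : forall x, sigma x = if x == u then pi v else if x == v then pi u else pi x.
  move=> x; rewrite permM.
  case: eqVneq => [->|xu]; first by rewrite tpermL.
  case: eqVneq => [->|xv]; first by rewrite tpermR.
  by apply: tpermD; rewrite (inj_eq perm_inj) eq_sym.
have Hws : weakly_increasing (permact sigma a).
  have fE : forall k, (permact sigma a k %/ 2)%Z = (permact pi a k %/ 2)%Z.
    move=> k; rewrite /permact invMg tpermV permM.
    case: (eqVneq k (pi u)) => [->|ku]; first by rewrite tpermL !permK euv.
    case: (eqVneq k (pi v)) => [->|kv]; first by rewrite tpermR !permK euv.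
    by rewrite tpermD // eq_sym.
  by move=> k l kl; rewrite /preceq !fE; apply: Hw.
have := Hmin _ Hws; apply/negP; rewrite -ltnNge.
have vu : (v == u) = false.
  by apply/eqP => /(congr1 val) /= h; move: uv; rewrite h ltnn.
apply: proper_card; apply/properP; split.
  have uv' : (u == v) = false by rewrite eq_sym.
  have F z : [\/ z = u, z = v | [/\ (z == u) = false, (z == v) = false,
     (pi z != pi u :> nat), (pi z != pi v :> nat) &
     (pi v < pi z < pi u -> u < z < v)]].
    case: (eqVneq z u) => [->|zu]; first by constructor 1.
    case: (eqVneq z v) => [->|zv]; first by constructor 2.
    constructor 3; split => //; first by apply/eqP => /ord_inj/perm_inj; apply/eqP.
    by apply/eqP => /ord_inj/perm_inj; apply/eqP.
    exact: mid.
  apply/subsetP => -[x y]; rewrite !inE /= !sE => /andP[xy H]; move: xy H.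
  case: (F x) => [->|->|[x1 x2 x3 x4 x5]]; case: (F y) => [->|->|[y1 y2 y3 y4 y5]];
  rewrite ?eqxx ?vu ?uv' ?x1 ?x2 ?y1 ?y2 /=;
  clear F sE Hws Hmin Hw IH cls mid euv; try lia.
exists (u, v); rewrite !inE /= ?uv ?puv //= !sE eqxx.
rewrite vu eqxx -leqNgt ltnW //.
Qed.

Lemma half_eq (x y : int) : (x %% 2)%Z = 0%R -> y = (x + 1)%R -> (y %/ 2)%Z = (x %/ 2)%Z.
Proof. by move=> hx ->; rewrite {1}(divz_eq x 2) hx addr0 divzMDl // (@divz_small 1 2) ?addr0. Qed.

Theorem lemma5p9 (T : finType) (par : T -> bool) (e : rel T) (m : nat)
  (i : 'I_m -> T) (a : 'I_m -> int) (pi_a : 'S_m) :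
  simple_bipartite par e ->
  integral par i a ->
  weakly_increasing (permact pi_a a) ->
  (forall sigma : 'S_m, weakly_increasing (permact sigma a) ->
     perm_length pi_a <= perm_length sigma) ->
  admissible par e i a pi_a.
Proof.
move=> _ Hint Hw Hmin k l; rewrite /not_switchable => /andP[kl H].
have E : (a k %/ 2)%Z = (a l %/ 2)%Z.
  case/orP: H => /andP[/and3P[_ p1 _] /eqP h].
    by apply: half_eq h; rewrite Hint (negbTE p1).
  by symmetry; apply: half_eq h; rewrite Hint (negbTE p1).
have nuv := @core _ _ _ Hw Hmin.
case: (ltngtP k l) => [kl'|lk|/val_inj kl']; last by rewrite kl' eqxx in kl.
- case: (ltngtP (pi_a k) (pi_a l)) => // [h|/val_inj/perm_inj h].
    by case: (nuv k l kl' E h).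
  by move: kl'; rewrite h ltnn.
- case: (ltngtP (pi_a k) (pi_a l)) => // h.
  by case: (nuv l k lk (esym E) h).
Qed.
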